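(* Let $T$ be a complete theory with monster model $\mathcal{U}$, $A\subseteq\mathcal{U}$ small, $\mu\in\mathfrak{M}_x(\mathcal{U})$, $\nu\in\mathfrak{M}_y(\mathcal{U})$. If $\mu$ is invariant over $A$ and $\mu\geq_{\mathbb{E},A}\nu$, then $\nu$ is invariant over $A$. Moreover, if $\mu$ is invariant and $\mu\geq_{\mathbb{E}}\nu$, then $\nu$ is invariant.
   Context: For $C\subseteq\mathcal{U}$, $\mathcal{L}_x(C)$ is the Boolean algebra of formulas in $x$ with parameters from $C$ modulo $T$, embedded in $\mathcal{L}_{xy}(C)$ via $\varphi(x)\mapsto\varphi(x)\wedge y=y$; $\mathfrak{M}_x(C)$ is the set of finitely additive probability measures on $\mathcal{L}_x(C)$. For $\omega\in\mathfrak{M}_{xy}(C)$, $\pi_x(\omega)(\varphi(x))=\omega(\varphi(x)\wedge y=y)$ (similarly $\pi_y$); $\omega|_D$ is restriction. $\mu\geq_{\mathbb{E},A}\nu$ means there is $\lambda\in\mathfrak{M}_{xy}(A)$ with $\pi_x(\lambda)=\mu|_A$ such that every $\omega\in\mathfrak{M}_{xy}(\mathcal{U})$ with $\omega|_A=\lambda$ and $\pi_x(\omega)=\mu$ satisfies $\pi_y(\omega)=\nu$; $\mu\geq_{\mathbb{E}}\nu$ means this for some small $A$. A global measure $\mu\in\mathfrak{M}_x(\mathcal{U})$ is invariant over $A$ if $\mu(\varphi(x,b))=\mu(\varphi(x,c))$ for every $\varphi(x,z)\in\mathcal{L}_{xz}(\emptyset)$ and $b,c\in\mathcal{U}^z$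 with $\operatorname{tp}(b/A)=\operatorname{tp}(c/A)$; $\mu$ is invariant if it is invariant over some small $A$. *)

(* Defs.v *)
From Stdlib Require Import Reals.
From mathcomp Require Import all_boot.

Set Implicit Arguments.
Unset Strict Implicit.
Unset Printing Implicit Defensive.

Record language := Language {
  fsym : Type; farity : fsym -> nat;
  rsym : Type; rarity : rsym -> nat }.

Inductive term (L : language) (n : nat) : Type :=
| tvar : 'I_n -> term L n
| tfun (f : fsym L) : ('I_(farity f) -> term L n) -> term L n.

Inductive form (L : language) : nat -> Type :=
| feq n : term L n -> term L n -> form L n
| frel n (r : rsym L) : ('I_(rarity r) -> term L n) -> form L n
| ffalse n : form L n
| fneg n : form L n -> form L n
| fand n : form L n -> form L n -> form L n
| fex n : form L n.+1 -> form L n.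

Record structure (L : language) := Structure {
  carrier :> Type;
  finterp : forall f : fsym L, ('I_(farity f) -> carrier) -> carrier;
  rinterp : forall r : rsym L, ('I_(rarity r) -> carrier) -> Prop }.

Fixpoint eval L (M : structure L) n (e : 'I_n -> M) (t : term L n) {struct t} : M :=
  match t with
  | tvar i => e i
  | tfun f ts => @finterp _ M f (fun i => eval e (ts i))
  end.

(* extend an assignment by a new last variable (index n) *)
Definition ext (M : Type) n (e : 'I_n -> M) (u : M) : 'I_n.+1 -> M :=
  fun i => if unlift ord_max i is Some j then e j else u.

Fixpoint sat L (M : structure L) n (phi : form L n) {struct phi} : ('I_n -> M) -> Prop :=
  match phi in form _ k return ('I_k -> M) -> Prop with
  | feq _ t1 t2 => fun e => eval e t1 = eval e t2
  | frel _ r ts => fun e => @rinterp _ M r (fun i => eval e (ts i))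
  | ffalse _ => fun _ => False
  | fneg _ p => fun e => ~ sat p e
  | fand _ p q => fun e => sat p e /\ sat q e
  | fex _ p => fun e => exists u, sat p (ext e u)
  end.

(* concatenation of tuples (x-variables first, then parameter variables) *)
Definition tcat (M : Type) n k (a : 'I_n -> M) (c : 'I_k -> M) : 'I_(n + k) -> M :=
  fun i => match split i with inl j => a j | inr j => c j end.

(** * Definable sets = formulas with parameters modulo T = Th(U) *)

Section Monster.
Variables (L : language) (M : structure L).

Definition defset n k (phi : form L (n + k)) (c : 'I_k -> M) : ('I_n -> M) -> Prop :=
  fun a => sat phi (tcat a c).

Definition definable n (C : M -> Prop) (S : ('I_n -> M) -> Prop) : Prop :=
  exists k (phi : form L (n + k)) (c : 'I_k -> M),
    (forall i, C (c i)) /\ S = defset phi c.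

Definition allM : M -> Prop := fun _ => True.

(* finitely additive probability measure on L_x(C) (values outside
   the C-definable sets are irrelevant) *)
Definition keisler n (C : M -> Prop) (m : (('I_n -> M) -> Prop) -> R) : Prop :=
  m (fun _ => True) = R1 /\
  (forall S, definable C S -> Rle R0 (m S)) /\
  (forall S T, definable C S -> definable C T ->
     (forall a, S a -> T a -> False) ->
     m (fun a => S a \/ T a) = Rplus (m S) (m T)).

Definition agree n (C : M -> Prop) (m1 m2 : (('I_n -> M) -> Prop) -> R) : Prop :=
  forall S, definable C S -> m1 S = m2 S.

Definition proj_x n p (w : (('I_(n + p) -> M) -> Prop) -> R)
  : (('I_n -> M) -> Prop) -> R :=
  fun S => w (fun v => S (fun i => v (lshift p i))).

Definition proj_y n p (w : (('I_(n + p) -> M) -> Prop) -> R)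
  : (('I_p -> M) -> Prop) -> R :=
  fun S => w (fun v => S (fun j => v (rshift n j))).

Definition same_type (A : M -> Prop) k (b c : 'I_k -> M) : Prop :=
  forall l (psi : form L (k + l)) (a : 'I_l -> M), (forall i, A (a i)) ->
    (sat psi (tcat b a) <-> sat psi (tcat c a)).

Definition invariant_over (A : M -> Prop) n (mu : (('I_n -> M) -> Prop) -> R) : Prop :=
  forall k (phi : form L (n + k)) (b c : 'I_k -> M),
    same_type A b c -> mu (defset phi b) = mu (defset phi c).

Definition geE (A : M -> Prop) n p (mu : (('I_n -> M) -> Prop) -> R)
    (nu : (('I_p -> M) -> Prop) -> R) : Prop :=
  exists lam : (('I_(n + p) -> M) -> Prop) -> R,
    keisler A lam /\ agree A (proj_x lam) mu /\
    forall w : (('I_(n + p) -> M) -> Prop) -> R,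
      keisler allM w -> agree A w lam -> agree allM (proj_x w) mu ->
      agree allM (proj_y w) nu.

Definition card_lt (T K : Type) : Prop :=
  (exists f : T -> K, injective f) /\ ~ (exists g : K -> T, injective g).

Definition small (kappa : Type) (A : M -> Prop) : Prop := card_lt {x | A x} kappa.

Definition measure_invariant (kappa : Type) n (mu : (('I_n -> M) -> Prop) -> R) : Prop :=
  exists A, small kappa A /\ invariant_over A mu.

Definition geE_some (kappa : Type) n p (mu : (('I_n -> M) -> Prop) -> R)
    (nu : (('I_p -> M) -> Prop) -> R) : Prop :=
  exists A, small kappa A /\ geE A mu nu.

Definition pform n := {k : nat & (form L (n + k) * ('I_k -> M))%type}.
Definition holds n (q : pform n) (a : 'I_n -> M) : Prop :=
  sat (projT2 q).1 (tcat a (projT2 q).2).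

Definition saturated (kappa : Type) : Prop :=
  forall (A : M -> Prop), small kappa A -> forall n (p : pform n -> Prop),
    (forall q, p q -> forall i, A ((projT2 q).2 i)) ->
    (forall s : seq (pform n), (forall q, List.In q s -> p q) ->
       exists a, forall q, List.In q s -> holds q a) ->
    exists a, forall q, p q -> holds q a.

Definition automorphism (s : M -> M) : Prop :=
  bijective s /\
  (forall f args, s (@finterp _ M f args) = @finterp _ M f (fun i => s (args i))) /\
  (forall r args, @rinterp _ M r args <-> @rinterp _ M r (fun i => s (args i))).

Definition elementary_on (A : M -> Prop) (f : M -> M) : Prop :=
  forall k (phi : form L k) (a : 'I_k -> M), (forall i, A (a i)) ->
    (sat phi a <-> sat phi (fun i => f (a i))).

Definition strongly_homogeneous (kappa : Type) : Prop :=
  forall (A : M -> Prop) (f : M -> M), small kappa A -> elementary_on A f ->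
    exists s, automorphism s /\ forall x, A x -> s x = f x.

(* M is a monster model (of its complete theory T = Th(M)) relative to the
   cardinal kappa (represented by a type): kappa infinite, |L| < kappa,
   M kappa-saturated and strongly kappa-homogeneous. *)
Definition monster (kappa : Type) : Prop :=
  (exists f : nat -> kappa, injective f) /\
  card_lt (fsym L + rsym L) kappa /\
  saturated kappa /\ strongly_homogeneous kappa.

End Monster.

(* Main.v *)
Require Import Defs.
From Stdlib Require Import Reals Lra Lia ClassicalEpsilon FunctionalExtensionality PropExtensionality Classical ProofIrrelevance List.
From mathcomp Require classical_sets.
Open Scope R_scope.

Section Ext.
Variable V : Type.

Definition ind (S : V -> Prop) (v : V) : R :=
  if excluded_middle_informative (S v) then 1 else 0.

Lemma ind_in S v : S v -> ind S v = 1.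
Proof. unfold ind; destruct excluded_middle_informative; tauto. Qed.
Lemma ind_out S v : ~ S v -> ind S v = 0.
Proof. unfold ind; destruct excluded_middle_informative; tauto. Qed.
Lemma ind_01 S v : 0 <= ind S v <= 1.
Proof. unfold ind; destruct excluded_middle_informative; lra. Qed.

Definition Q := ((V -> R) * R)%type.

Fixpoint cf (l : list (R * Q)) (v : V) : R :=
  match l with nil => 0 | e :: l' => fst e * fst (snd e) v + cf l' v end.
Fixpoint cr (l : list (R * Q)) : R :=
  match l with nil => 0 | e :: l' => fst e * snd (snd e) + cr l' end.

Definition cons_ (G : Q -> Prop) : Prop :=
  forall l, (forall e, In e l -> G (snd e)) ->
  forall t, (forall v, cf l v <= t) -> cr l <= t.

Lemma cf_app l1 l2 v : cf (l1 ++ l2) v = cf l1 v + cf l2 v.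
Proof. induction l1 as [|e l IH]; simpl; [lra | rewrite IH; lra]. Qed.
Lemma cr_app l1 l2 : cr (l1 ++ l2) = cr l1 + cr l2.
Proof. induction l1 as [|e l IH]; simpl; [lra | rewrite IH; lra]. Qed.

Definition scl (c : R) (l : list (R * Q)) := map (fun e => (c * fst e, snd e)) l.
Lemma cf_scl c l v : cf (scl c l) v = c * cf l v.
Proof. induction l as [|e l IH]; simpl; [lra | rewrite IH; simpl; lra]. Qed.
Lemma cr_scl c l : cr (scl c l) = c * cr l.
Proof. induction l as [|e l IH]; simpl; [lra | rewrite IH; simpl; lra]. Qed.
Lemma scl_in c l e : In e (scl c l) -> exists e', In e' l /\ snd e = snd e'.
Proof.
unfold scl; intro H; apply in_map_iff in H; destruct H as [e' [<- H]]; exists e'; auto.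
Qed.

Lemma cons_mono (G G' : Q -> Prop) : (forall q, G q -> G' q) -> cons_ G' -> cons_ G.
Proof. intros H HG l Hl; apply HG; intros e He; apply H, Hl, He. Qed.

Lemma one_step G (HG : cons_ G) (S : V -> Prop) :
  exists r, cons_ (fun q => G q \/ q = (ind S, r)).
Proof.
set (Lo := fun z => exists l t, (forall e, In e l -> G (snd e)) /\
   (forall v, cf l v - ind S v <= t) /\ z = cr l - t).
assert (LoUp : forall z, Lo z -> forall l2 t2, (forall e, In e l2 -> G (snd e)) ->
   (forall v, cf l2 v + ind S v <= t2) -> z <= t2 - cr l2).
{ intros z [l1 [t1 [H1 [H2 ->]]]] l2 t2 H3 H4.
  assert (cr (l1 ++ l2) <= t1 + t2).
  { apply HG.
    - intros e He; apply in_app_or in He; destruct He; auto.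
    - intros v; rewrite cf_app; specialize (H2 v); specialize (H4 v); lra. }
  rewrite cr_app in H; lra. }
assert (Hb : bound Lo).
{ exists 1; intros z Hz; specialize (LoUp z Hz nil 1).
  simpl in LoUp; assert (z <= 1 - 0); [apply LoUp | lra].
  - intros e [].
  - intros v; destruct (ind_01 S v); lra. }
assert (Hne : exists z, Lo z).
{ exists 0, nil, 0; repeat split.
  - intros e [].
  - intros v; simpl; destruct (ind_01 S v); lra.
  - simpl; lra. }
destruct (completeness Lo Hb Hne) as [r [Hr1 Hr2]].
exists r.
assert (Hup : forall l2 t2, (forall e, In e l2 -> G (snd e)) ->
   (forall v, cf l2 v + ind S v <= t2) -> r <= t2 - cr l2).
{ intros l2 t2 H3 H4; apply Hr2; intros z Hz; exact (LoUp z Hz l2 t2 H3 H4). }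
intros l Hl t Ht.
assert (Dec : exists l' b, (forall e, In e l' -> G (snd e)) /\
   (forall v, cf l v = cf l' v + b * ind S v) /\ cr l = cr l' + b * r).
{ clear Ht; induction l as [|e l IH].
  - exists nil, 0; simpl; repeat split; [intros e []| intros; lra | lra].
  - destruct IH as [l' [b [H1 [H2 H3]]]].
    { intros e' He'; apply Hl; simpl; auto. }
    destruct (Hl e (or_introl eq_refl)) as [He|He].
    + exists (e :: l'), b; simpl; repeat split.
      * intros e' [<-|He']; auto.
      * intros v; rewrite H2; lra.
      * rewrite H3; lra.
    + exists l', (b + fst e); simpl; repeat split; auto.
      * intros v; rewrite H2, He; simpl; lra.
      * rewrite H3, He; simpl; lra. }
destruct Dec as [l' [b [H1 [H2 H3]]]].
rewrite H3.
destruct (total_order_T b 0) as [[Hb0|Hb0]|Hb0].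
-
  set (g := - b).
  assert (Hz : Lo (cr l' / g - t / g)).
  { exists (scl (/ g) l'), (t / g); repeat split.
    - intros e He; destruct (scl_in _ _ _ He) as [e' [He' ->]]; auto.
    - intros v; rewrite cf_scl; specialize (Ht v); rewrite H2 in Ht.
      unfold g; unfold Rdiv.
      assert (Hg : 0 < / - b) by (apply Rinv_0_lt_compat; lra).
      assert (E : / - b * cf l' v - ind S v = / - b * (cf l' v + b * ind S v)) by (field; lra).
      rewrite E, (Rmult_comm t); apply Rmult_le_compat_l; lra.
    - rewrite cr_scl; unfold Rdiv; ring. }
  specialize (Hr1 _ Hz).
  assert (E : cr l' / g - t / g = (cr l' - t) / g) by (unfold Rdiv; ring).
  rewrite E in Hr1.
  assert (Hg : 0 < g) by (unfold g; lra).
  apply (Rmult_le_compat_l g) in Hr1; [|lra].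
  assert (E2 : g * ((cr l' - t) / g) = cr l' - t) by (field; lra).
  rewrite E2 in Hr1; unfold g in Hr1; lra.
- subst b; assert (cr l' <= t); [|lra].
  apply (HG l' H1); intros v; specialize (Ht v); rewrite H2 in Ht; lra.
- assert (Hu : r <= t / b - cr (scl (/ b) l')).
  { apply Hup.
    - intros e He; destruct (scl_in _ _ _ He) as [e' [He' ->]]; auto.
    - intros v; rewrite cf_scl; specialize (Ht v); rewrite H2 in Ht.
      assert (E : / b * cf l' v + ind S v = / b * (cf l' v + b * ind S v)) by (field; lra).
      rewrite E; unfold Rdiv; rewrite (Rmult_comm t); apply Rmult_le_compat_l; [|lra].
      left; apply Rinv_0_lt_compat; lra. }
  rewrite cr_scl in Hu.
  apply (Rmult_le_compat_l b) in Hu; [|lra].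
  assert (E2 : b * (t / b - / b * cr l') = t - cr l') by (field; lra).
  rewrite E2 in Hu; lra.
Qed.

End Ext.
Arguments ind {V} S v.
Arguments cf {V} l v.
Arguments cr {V} l.
Arguments cons_ {V} G.
Arguments scl {V} c l.
Arguments one_step {V} G HG S.
Arguments cons_mono {V} G G'.
Arguments ind_in {V} S v.
Arguments ind_out {V} S v.
Arguments ind_01 {V} S v.

Section ZornExt.
Variable V : Type.
Variable seed : Q V -> Prop.
Hypothesis Hseed : cons_ seed.

Lemma chain_pick (F : (Q V -> Prop) -> Prop)
  (Ht : forall s t, F s -> F t -> (forall x, s x -> t x) \/ (forall x, t x -> s x))
  (l : list (R * Q V)) :
  (forall e, In e l -> seed (snd e) \/ exists A, F A /\ A (snd e)) ->
  (forall e, In e l -> seed (snd e)) \/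
  exists A0, F A0 /\ forall e, In e l -> seed (snd e) \/ A0 (snd e).
Proof.
induction l as [|e l IH]; intro H.
- left; intros e [].
- destruct IH as [IH|[A0 [HA0 IH]]].
  { intros e' He'; apply H; simpl; auto. }
  + destruct (H e (or_introl eq_refl)) as [He|[A [HA He]]].
    * left; intros e' [<-|He']; auto.
    * right; exists A; split; auto; intros e' [<-|He']; auto.
  + destruct (H e (or_introl eq_refl)) as [He|[A [HA He]]].
    * right; exists A0; split; auto; intros e' [<-|He']; auto.
    * destruct (Ht A A0 HA HA0) as [Hs|Hs].
      -- right; exists A0; split; auto; intros e' [<-|He']; auto.
      -- right; exists A; split; auto; intros e' [<-|He']; auto.
         destruct (IH e' He'); auto.
Qed.

Lemma ext_measure : exists w : (V -> Prop) -> R,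
  w (fun _ => True) = 1 /\ (forall S, 0 <= w S) /\
  (forall S T, (forall v, S v -> T v -> False) -> w (fun v => S v \/ T v) = w S + w T) /\
  (forall S r, seed (ind S, r) -> w S = r).
Proof.
set (P := fun A : Q V -> Prop => cons_ (fun q => seed q \/ A q)).
destruct (@classical_sets.Zorn_bigcup _ P) as [A [HA Hmax]].
{ intros F HF Htot l Hl t Ht.
  destruct (chain_pick F Htot l) as [H|[A0 [HA0 H]]].
  - intros e He; destruct (Hl e He) as [H|[i Hi H]]; auto.
    right; exists i; auto.
  - apply Hseed; auto.
  - exact (HF A0 HA0 l H t Ht). }
set (G := fun q => seed q \/ A q).
assert (HG : cons_ G) by exact HA.
assert (Hall : forall S, exists r, G (ind S, r)).
{ intro S; destruct (one_step G HG S) as [r Hr]; exists r.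
  destruct (classic (A (ind S, r))) as [H|H]; [right; exact H|].
  exfalso; apply (Hmax (fun q => A q \/ q = (ind S, r))).
  - split.
    + intros q Hq; left; exact Hq.
    + intro Hs; apply H; apply Hs; right; reflexivity.
  - refine (cons_mono _ _ _ Hr); intros q [Hq|[Hq|Hq]]; unfold G; auto. }
set (w := fun S => proj1_sig (constructive_indefinite_description _ (Hall S))).
assert (Hw : forall S, G (ind S, w S)).
{ intro S; unfold w; destruct constructive_indefinite_description; auto. }
assert (Uniq : forall S r1 r2, G (ind S, r1) -> G (ind S, r2) -> r1 <= r2).
{ intros S r1 r2 H1 H2.
  assert (Hc := HG ((1, (ind S, r1)) :: (-1, (ind S, r2)) :: nil)).
  simpl in Hc; assert (1 * r1 + (-1 * r2 + 0) <= 0); [|lra].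
  apply Hc; [intros e [<-|[<-|[]]]; auto | intros v; lra]. }
exists w; split; [|split; [|split]].
- assert (H1 := HG ((1, (ind (fun _ => True), w (fun _ => True))) :: nil)).
  assert (H2 := HG ((-1, (ind (fun _ => True), w (fun _ => True))) :: nil)).
  simpl in H1, H2.
  assert (1 * w (fun _ => True) + 0 <= 1).
  { apply H1; [intros e [<-|[]]; simpl; apply Hw| intros v; rewrite (ind_in _ v I); lra]. }
  assert (-1 * w (fun _ => True) + 0 <= -1).
  { apply H2; [intros e [<-|[]]; simpl; apply Hw| intros v; rewrite (ind_in _ v I); lra]. }
  lra.
- intro S; assert (H1 := HG ((-1, (ind S, w S)) :: nil)); simpl in H1.
  assert (-1 * w S + 0 <= 0); [|lra].
  apply H1; [intros e [<-|[]]; simpl; apply Hw| intros v; destruct (ind_01 S v); lra].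
- intros S T HST.
  assert (E : forall v, ind (fun v => S v \/ T v) v = ind S v + ind T v).
  { intro v; destruct (classic (S v)) as [Hs|Hs]; destruct (classic (T v)) as [Ht|Ht].
    - exfalso; eauto.
    - rewrite (ind_in (fun v => S v \/ T v) v), (ind_in S v), (ind_out T v); auto; lra.
    - rewrite (ind_in (fun v => S v \/ T v) v), (ind_out S v), (ind_in T v); auto; lra.
    - rewrite (ind_out (fun v => S v \/ T v) v), (ind_out S v), (ind_out T v); auto; [lra|tauto]. }
  set (U := fun v => S v \/ T v).
  assert (H1 := HG ((1, (ind U, w U)) :: (-1, (ind S, w S)) :: (-1, (ind T, w T)) :: nil)).
  assert (H2 := HG ((-1, (ind U, w U)) :: (1, (ind S, w S)) :: (1, (ind T, w T)) :: nil)).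
  simpl in H1, H2.
  assert (1 * w U + (-1 * w S + (-1 * w T + 0)) <= 0).
  { apply H1; [intros e [<-|[<-|[<-|[]]]]; simpl; apply Hw| intros v; unfold U; rewrite E; lra]. }
  assert (-1 * w U + (1 * w S + (1 * w T + 0)) <= 0).
  { apply H2; [intros e [<-|[<-|[<-|[]]]]; simpl; apply Hw| intros v; unfold U; rewrite E; lra]. }
  unfold U in *; lra.
- intros S r Hs.
  assert (G (ind S, r)) by (left; exact Hs).
  apply Rle_antisym; [apply (Uniq S)|apply (Uniq S)]; auto.
Qed.

End ZornExt.

Section Lsum.
Variable A : Type.
Fixpoint lsum (f : A -> R) (l : list A) : R :=
  match l with nil => 0 | a :: l' => f a + lsum f l' end.

Lemma lsum_app f l1 l2 : lsum f (l1 ++ l2) = lsum f l1 + lsum f l2.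
Proof. induction l1; simpl; [lra | rewrite IHl1; lra]. Qed.
Lemma lsum_ext f g l : (forall a, In a l -> f a = g a) -> lsum f l = lsum g l.
Proof.
induction l as [|a l IH]; simpl; intro H; auto.
rewrite (H a (or_introl eq_refl)), IH; auto.
Qed.
Lemma lsum_le f g l : (forall a, In a l -> f a <= g a) -> lsum f l <= lsum g l.
Proof.
induction l as [|a l IH]; simpl; intro H; [lra|].
assert (f a <= g a) by auto; assert (lsum f l <= lsum g l) by auto; lra.
Qed.
Lemma lsum_plus f g l : lsum (fun a => f a + g a) l = lsum f l + lsum g l.
Proof. induction l; simpl; [lra | rewrite IHl; lra]. Qed.
Lemma lsum_scal c f l : lsum (fun a => c * f a) l = c * lsum f l.
Proof. induction l; simpl; [lra | rewrite IHl; lra]. Qed.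
Lemma lsum_scalr c f l : lsum (fun a => f a * c) l = lsum f l * c.
Proof. induction l; simpl; [lra | rewrite IHl; lra]. Qed.
Lemma lsum_zero l : lsum (fun _ => 0) l = 0.
Proof. induction l; simpl; [lra | rewrite IHl; lra]. Qed.
Lemma lsum_nonneg f l : (forall a, In a l -> 0 <= f a) -> 0 <= lsum f l.
Proof.
intro H; rewrite <- (lsum_zero l); apply lsum_le; auto.
Qed.
Lemma lsum_elem f l a : (forall a, In a l -> 0 <= f a) -> In a l -> f a <= lsum f l.
Proof.
induction l as [|b l IH]; simpl; intros H Ha; [destruct Ha|].
destruct Ha as [<-|Ha].
- assert (0 <= lsum f l) by (apply lsum_nonneg; auto); lra.
- assert (0 <= f b) by auto; assert (f a <= lsum f l) by auto; lra.
Qed.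
Lemma lsum_zero_elems f l : (forall a, In a l -> 0 <= f a) -> lsum f l <= 0 ->
  forall a, In a l -> f a = 0.
Proof.
intros H1 H2 a Ha; assert (f a <= lsum f l) by (apply lsum_elem; auto).
assert (0 <= f a) by auto; lra.
Qed.
End Lsum.
Arguments lsum {A} f l.

Lemma lsum_map (A B : Type) (f : B -> R) (g : A -> B) l :
  lsum f (map g l) = lsum (fun a => f (g a)) l.
Proof. induction l; simpl; [lra | rewrite IHl; lra]. Qed.

Lemma fext (A : Type) (f : (A -> Prop) -> R) S T : (forall a, S a <-> T a) -> f S = f T.
Proof.
intro H; f_equal; apply functional_extensionality; intro a;
apply propositional_extensionality; auto.
Qed.

Lemma ind_and (V : Type) (S E : V -> Prop) v : ind (fun w => S w /\ E w) v = ind S v * ind E v.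
Proof.
destruct (classic (S v)); destruct (classic (E v)).
- rewrite !ind_in; auto; lra.
- rewrite (ind_out _ v), (ind_out E v); [lra|auto|tauto].
- rewrite (ind_out _ v), (ind_out S v); [lra|auto|tauto].
- rewrite (ind_out _ v), (ind_out S v); [lra|auto|tauto].
Qed.

Lemma ind_split (V : Type) (S E : V -> Prop) v :
  ind (fun w => S w /\ E w) v + ind (fun w => S w /\ ~ E w) v = ind S v.
Proof.
destruct (classic (S v)); destruct (classic (E v)).
- rewrite (ind_in _ v), (ind_out _ v), (ind_in S v); auto; [lra|tauto].
- rewrite (ind_out _ v), (ind_in _ v), (ind_in S v); auto; [lra|tauto].
- rewrite (ind_out _ v), (ind_out _ v), (ind_out S v); auto; [lra|tauto|tauto].
- rewrite (ind_out _ v), (ind_out _ v), (ind_out S v); auto; [lra|tauto|tauto].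
Qed.

Section GM.
Variable W : Type.
Variable B : (W -> Prop) -> Prop.
Variable m : (W -> Prop) -> R.
Hypothesis BT : B (fun _ => True).
Hypothesis BN : forall S, B S -> B (fun w => ~ S w).
Hypothesis BI : forall S T, B S -> B T -> B (fun w => S w /\ T w).
Hypothesis m1 : m (fun _ => True) = 1.
Hypothesis m0 : forall S, B S -> 0 <= m S.
Hypothesis mA : forall S T, B S -> B T -> (forall w, S w -> T w -> False) ->
  m (fun w => S w \/ T w) = m S + m T.

Lemma BF : B (fun _ => False).
Proof.
assert (H := BN _ BT); simpl in H.
replace (fun _ : W => False) with (fun w : W => ~ True); auto.
apply functional_extensionality; intro; apply propositional_extensionality; tauto.
Qed.

Lemma BU S T : B S -> B T -> B (fun w => S w \/ T w).
Proof.
intros H1 H2; assert (H := BN _ (BI _ _ (BN _ H1) (BN _ H2))).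
replace (fun w => S w \/ T w) with (fun w => ~ (~ S w /\ ~ T w)); auto.
apply functional_extensionality; intro; apply propositional_extensionality; tauto.
Qed.

Lemma m_empty S : (forall w, ~ S w) -> m S = 0.
Proof.
intro H; rewrite (fext _ m S (fun _ => False)) by (intro w; split; [apply H|tauto]).
assert (E := mA _ _ BF BF (fun w a _ => a)); cbv beta in E.
rewrite (fext _ m (fun w => False \/ False) (fun _ => False)) in E by (intro; tauto).
lra.
Qed.

Lemma m_split S E : B S -> B E -> m S = m (fun w => S w /\ E w) + m (fun w => S w /\ ~ E w).
Proof.
intros HS HE.
rewrite <- mA; [| apply BI; auto | apply BI; auto | intros w [_ a] [_ b]; auto].
apply fext; intro w; split; [|tauto]; intro H; destruct (classic (E w)); tauto.
Qed.

Definition Kf (ks : list (R * (W -> Prop))) (w : W) : R :=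
  lsum (fun k => fst k * ind (snd k) w) ks.

Lemma OM ks : (forall k, In k ks -> B (snd k)) ->
  forall E c, B E -> (forall w, E w -> Kf ks w <= c) ->
  lsum (fun k => fst k * m (fun w => snd k w /\ E w)) ks <= c * m E.
Proof.
induction ks as [|[b E0] ks IH]; intros Hks E c HE Hc; simpl.
- destruct (classic (exists w, E w)) as [[w Hw]|Hn].
  + assert (0 <= c) by (apply (Hc w Hw)).
    assert (0 <= m E) by auto. apply Rmult_le_pos; auto.
  + rewrite m_empty; [lra|]; intros w Hw; apply Hn; exists w; auto.
- simpl in Hks.
  assert (HE0 : B E0) by (apply (Hks (b, E0)); auto).
  assert (Hks' : forall k, In k ks -> B (snd k)) by (intros; apply Hks; auto).
  assert (I1 := IH Hks' (fun w => E w /\ E0 w) (c - b) (BI _ _ HE HE0)).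
  assert (I2 := IH Hks' (fun w => E w /\ ~ E0 w) c (BI _ _ HE (BN _ HE0))).
  assert (S1 : lsum (fun k => fst k * m (fun w => snd k w /\ E w)) ks =
     lsum (fun k => fst k * m (fun w => snd k w /\ (E w /\ E0 w))) ks +
     lsum (fun k => fst k * m (fun w => snd k w /\ (E w /\ ~ E0 w))) ks).
  { rewrite <- lsum_plus; apply lsum_ext; intros k Hk.
    rewrite (m_split (fun w => snd k w /\ E w) E0); [|apply BI; auto|auto].
    rewrite (fext _ m (fun w => (snd k w /\ E w) /\ E0 w) (fun w => snd k w /\ (E w /\ E0 w))) by (intro; tauto).
    rewrite (fext _ m (fun w => (snd k w /\ E w) /\ ~ E0 w) (fun w => snd k w /\ (E w /\ ~ E0 w))) by (intro; tauto).
    lra. }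
  rewrite S1.
  rewrite (m_split E E0 HE HE0).
  rewrite (fext _ m (fun w => E0 w /\ E w) (fun w => E w /\ E0 w)) by (intro; tauto).
  assert (A1 : lsum (fun k => fst k * m (fun w => snd k w /\ (E w /\ E0 w))) ks <= (c - b) * m (fun w => E w /\ E0 w)).
  { apply I1; intros w [Hw Hw0]; assert (H := Hc w Hw); unfold Kf in H; simpl in H.
    rewrite (ind_in E0 w Hw0) in H; unfold Kf; lra. }
  assert (A2 : lsum (fun k => fst k * m (fun w => snd k w /\ (E w /\ ~ E0 w))) ks <= c * m (fun w => E w /\ ~ E0 w)).
  { apply I2; intros w [Hw Hw0]; assert (H := Hc w Hw); unfold Kf in H; simpl in H.
    rewrite (ind_out E0 w Hw0) in H; unfold Kf; lra. }
  lra.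
Qed.

End GM.

Lemma max_extract (A : Type) (l : list (R * A)) : l <> nil ->
  exists l1 e l2, l = l1 ++ e :: l2 /\ forall e', In e' l -> fst e' <= fst e.
Proof.
induction l as [|a l IH]; intro H; [congruence|].
destruct l as [|b l].
- exists nil, a, nil; split; auto; intros e' [<-|[]]; lra.
- destruct IH as [l1 [e [l2 [E H2]]]]; [congruence|].
  destruct (Rle_dec (fst a) (fst e)).
  + exists (a :: l1), e, l2; split; [rewrite E; auto|].
    intros e' [<-|He']; auto.
  + exists nil, a, (b :: l); split; auto.
    intros e' [<-|He']; [lra|]; assert (fst e' <= fst e) by auto; lra.
Qed.

Section Amalg.
Variables (V X : Type) (xof : V -> X).
Variables (B1 : (V -> Prop) -> Prop) (Bx1 Bx : (X -> Prop) -> Prop).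
Variables (lam : (V -> Prop) -> R) (mu : (X -> Prop) -> R).
Hypothesis B1T : B1 (fun _ => True).
Hypothesis B1N : forall S, B1 S -> B1 (fun w => ~ S w).
Hypothesis B1I : forall S T, B1 S -> B1 T -> B1 (fun w => S w /\ T w).
Hypothesis BxT : Bx (fun _ => True).
Hypothesis BxN : forall S, Bx S -> Bx (fun w => ~ S w).
Hypothesis BxI : forall S T, Bx S -> Bx T -> Bx (fun w => S w /\ T w).
Hypothesis Bx1T : Bx1 (fun _ => True).
Hypothesis Bx1N : forall S, Bx1 S -> Bx1 (fun w => ~ S w).
Hypothesis Bx1I : forall S T, Bx1 S -> Bx1 T -> Bx1 (fun w => S w /\ T w).
Hypothesis Bx1sub : forall E, Bx1 E -> Bx E.
Hypothesis B1cyl : forall E, Bx1 E -> B1 (fun v => E (xof v)).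
Hypothesis B1proj : forall D, B1 D -> Bx1 (fun x => exists v, D v /\ xof v = x).
Hypothesis xsurj : forall x, exists v, xof v = x.
Hypothesis lam1 : lam (fun _ => True) = 1.
Hypothesis lam0 : forall S, B1 S -> 0 <= lam S.
Hypothesis lamA : forall S T, B1 S -> B1 T -> (forall w, S w -> T w -> False) ->
  lam (fun w => S w \/ T w) = lam S + lam T.
Hypothesis mu1 : mu (fun _ => True) = 1.
Hypothesis mu0 : forall S, Bx S -> 0 <= mu S.
Hypothesis muA : forall S T, Bx S -> Bx T -> (forall w, S w -> T w -> False) ->
  mu (fun w => S w \/ T w) = mu S + mu T.
Hypothesis agr : forall E, Bx1 E -> lam (fun v => E (xof v)) = mu E.

Definition DS := list (R * (V -> Prop)).

Lemma B1_bigU (ds : DS) : (forall e, In e ds -> B1 (snd e)) ->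
  B1 (fun v => exists e, In e ds /\ snd e v).
Proof.
induction ds as [|a ds IH]; intro H.
- replace (fun v => exists e, In e nil /\ snd e v) with (fun _ : V => False).
  + apply (BF V B1 B1T B1N).
  + apply functional_extensionality; intro v; apply propositional_extensionality.
    split; [tauto|]; intros [e [[] _]].
- replace (fun v => exists e, In e (a :: ds) /\ snd e v) with
    (fun v => snd a v \/ exists e, In e ds /\ snd e v).
  + apply (BU V B1 B1N B1I); [apply H; simpl; auto | apply IH; intros; apply H; simpl; auto].
  + apply functional_extensionality; intro v; apply propositional_extensionality.
    split.
    * intros [Ha|[e [He Hv]]]; [exists a; simpl; auto | exists e; simpl; auto].
    * intros [e [[<-|He] Hv]]; [left; auto | right; exists e; auto].
Qed.

Lemma LU (ds : DS) S : (forall e, In e ds -> B1 (snd e)) -> B1 S ->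
  (forall v, lsum (fun e => ind (snd e) v) ds <= 1) ->
  lsum (fun e => lam (fun v => snd e v /\ S v)) ds =
  lam (fun v => S v /\ exists e, In e ds /\ snd e v).
Proof.
induction ds as [|a ds IH]; intros HB HS Hd; simpl.
- symmetry; apply (m_empty V B1 lam B1T B1N lamA); intros v [_ [e [[] _]]].
- assert (HB' : forall e, In e ds -> B1 (snd e)) by (intros; apply HB; simpl; auto).
  assert (Hd' : forall v, lsum (fun e => ind (snd e) v) ds <= 1).
  { intro v; specialize (Hd v); simpl in Hd; destruct (ind_01 (snd a) v); lra. }
  rewrite (IH HB' HS Hd').
  rewrite <- lamA.
  + apply fext; intro v; split.
    * intros [[Ha Hs]|[Hs [e [He Hv]]]]; split; auto; [exists a; simpl; auto| exists e; simpl; auto].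
    * intros [Hs [e [[<-|He] Hv]]]; [left; auto| right; split; auto; exists e; auto].
  + apply B1I; auto; apply HB; simpl; auto.
  + apply B1I; auto; apply B1_bigU; auto.
  + intros v [Ha _] [_ [e [He Hv]]].
    specialize (Hd v); simpl in Hd.
    assert (ind (snd e) v <= lsum (fun e => ind (snd e) v) ds).
    { apply (lsum_elem _ (fun e => ind (snd e) v)); auto; intros; apply ind_01. }
    rewrite (ind_in _ v Ha) in Hd; rewrite (ind_in _ v Hv) in H; lra.
Qed.

Lemma single (ds : DS) e v : In e ds -> snd e v ->
  lsum (fun e => ind (snd e) v) ds <= 1 ->
  lsum (fun e => fst e * ind (snd e) v) ds = fst e.
Proof.
induction ds as [|a ds IH]; simpl; intros He Hv Hd; [destruct He|].
assert (Hn : 0 <= lsum (fun e => ind (snd e) v) ds) by (apply lsum_nonneg; intros; apply ind_01).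
destruct He as [<-|He].
- rewrite (ind_in _ v Hv) in *.
  assert (Z := lsum_zero_elems _ (fun e => ind (snd e) v) ds (fun a _ => proj1 (ind_01 (snd a) v))).
  rewrite (lsum_ext _ _ (fun _ => 0) ds); [rewrite lsum_zero; lra|].
  intros b Hb; rewrite Z; auto; lra.
- destruct (classic (snd a v)) as [Ha|Ha].
  + assert (ind (snd e) v <= lsum (fun e => ind (snd e) v) ds).
    { apply (lsum_elem _ (fun e => ind (snd e) v)); auto; intros; apply ind_01. }
    rewrite (ind_in _ v Ha) in Hd; rewrite (ind_in _ v Hv) in H; lra.
  + rewrite (ind_out _ v Ha) in *; rewrite IH; auto; lra.
Qed.

Lemma sum_one_cov (ds : DS) v : lsum (fun e => ind (snd e) v) ds = 1 -> exists e, In e ds /\ snd e v.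
Proof.
intro H; destruct (classic (exists e, In e ds /\ snd e v)) as [|Hn]; auto.
rewrite (lsum_ext _ _ (fun _ => 0)) in H; [rewrite lsum_zero in H; lra|].
intros e He; apply ind_out; intro Hv; apply Hn; exists e; auto.
Qed.

Definition KS := list (R * (X -> Prop)).

Lemma greedy n : forall (ds : DS) (ks : KS) E t, length ds = n ->
  (forall e, In e ds -> B1 (snd e)) ->
  (forall k, In k ks -> Bx (snd k)) -> Bx1 E ->
  (forall v, lsum (fun e => ind (snd e) v) ds <= 1) ->
  (forall v, E (xof v) -> exists e, In e ds /\ snd e v) ->
  (forall e v, In e ds -> snd e v -> E (xof v) -> fst e + Kf X ks (xof v) <= t) ->
  lsum (fun e => fst e * lam (fun v => snd e v /\ E (xof v))) ds +
  lsum (fun k => fst k * mu (fun x => snd k x /\ E x)) ks <= t * mu E.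
Proof.
induction n as [|n IH]; intros ds ks E t Hlen HB HK HE Hd Hc H2.
- destruct ds; [|simpl in Hlen; congruence]; simpl.
  assert (HnE : forall x, ~ E x).
  { intros x Hx; destruct (xsurj x) as [v <-]; destruct (Hc v Hx) as [e [[] _]]. }
  rewrite (m_empty X Bx mu BxT BxN muA E HnE).
  rewrite (lsum_ext _ _ (fun _ => 0)); [rewrite lsum_zero; lra|].
  intros k Hk; rewrite (m_empty X Bx mu BxT BxN muA); [lra|]; intros x [_ Hx]; exact (HnE x Hx).
- destruct (max_extract _ ds) as [ds1 [es [ds2 [Eds Hmax]]]].
  { intro; subst; simpl in Hlen; congruence. }
  set (P := fun x => exists v, snd es v /\ xof v = x).
  assert (HesIn : In es ds) by (rewrite Eds; apply in_or_app; simpl; auto).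
  assert (HP : Bx1 P) by (apply B1proj; apply HB; auto).
  set (E1 := fun x => E x /\ P x).
  set (E2 := fun x => E x /\ ~ P x).
  assert (HE1 : Bx1 E1) by (apply Bx1I; auto).
  assert (HE2 : Bx1 E2) by (apply Bx1I; auto).
  assert (SL : forall e, In e ds -> lam (fun v => snd e v /\ E (xof v)) =
     lam (fun v => snd e v /\ E1 (xof v)) + lam (fun v => snd e v /\ E2 (xof v))).
  { intros e He.
    rewrite (m_split V B1 lam B1N B1I lamA (fun v => snd e v /\ E (xof v)) (fun v => P (xof v))).
    - unfold E1, E2; f_equal; apply fext; intro; tauto.
    - apply B1I; auto.
    - apply B1cyl; auto. }
  assert (SM : forall k, In k ks -> mu (fun x => snd k x /\ E x) =
     mu (fun x => snd k x /\ E1 x) + mu (fun x => snd k x /\ E2 x)).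
  { intros k Hk.
    rewrite (m_split X Bx mu BxN BxI muA (fun x => snd k x /\ E x) P).
    - unfold E1, E2; f_equal; apply fext; intro; tauto.
    - apply BxI; auto.
    - auto. }
  assert (SE : mu E = mu E1 + mu E2).
  { rewrite (m_split X Bx mu BxN BxI muA E P); auto. }
  rewrite (lsum_ext _ _ (fun e => fst e * lam (fun v => snd e v /\ E1 (xof v)) +
                                 fst e * lam (fun v => snd e v /\ E2 (xof v))))
    by (intros e He; rewrite SL; auto; lra).
  rewrite (lsum_ext _ (fun k => fst k * mu (fun x => snd k x /\ E x))
                      (fun k => fst k * mu (fun x => snd k x /\ E1 x) +
                                 fst k * mu (fun x => snd k x /\ E2 x)))
    by (intros k Hk; rewrite SM; auto; lra).
  rewrite !lsum_plus, SE.
  assert (P1 : lsum (fun e => fst e * lam (fun v => snd e v /\ E1 (xof v))) ds <= fst es * mu E1).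
  { apply Rle_trans with (lsum (fun e => fst es * lam (fun v => snd e v /\ E1 (xof v))) ds).
    - apply lsum_le; intros e He; apply Rmult_le_compat_r; auto.
    - rewrite lsum_scal; apply Req_le; f_equal.
      rewrite (LU ds (fun v => E1 (xof v)) HB (B1cyl _ HE1) Hd).
      rewrite <- agr; auto; apply fext; intro v; split; [tauto|].
      intro Hv; split; auto; apply Hc; destruct Hv; auto. }
  assert (P1b : lsum (fun k => fst k * mu (fun x => snd k x /\ E1 x)) ks <= (t - fst es) * mu E1).
  { apply (OM X Bx mu BxT BxN BxI mu0 muA ks HK E1 (t - fst es)); auto.
    intros x [Hx [v [Hv <-]]]; assert (H := H2 es v HesIn Hv Hx); lra. }
  assert (P2 : lsum (fun e => fst e * lam (fun v => snd e v /\ E2 (xof v))) (ds1 ++ ds2) +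
       lsum (fun k => fst k * mu (fun x => snd k x /\ E2 x)) ks <= t * mu E2).
  { apply IH; auto.
    - rewrite Eds in Hlen; rewrite length_app in *; simpl in Hlen; lia.
    - intros e He; apply HB; rewrite Eds; apply in_or_app; simpl; destruct (in_app_or _ _ _ He); auto.
    - intro v; specialize (Hd v); rewrite Eds, lsum_app in Hd; simpl in Hd; rewrite lsum_app.
      destruct (ind_01 (snd es) v); lra.
    - intros v [Hv Hnp]; destruct (Hc v Hv) as [e [He Hev]].
      rewrite Eds in He; destruct (in_app_or _ _ _ He) as [He1|[He1|He1]].
      + exists e; split; auto; apply in_or_app; auto.
      + subst e; exfalso; apply Hnp; exists v; auto.
      + exists e; split; auto; apply in_or_app; auto.
    - intros e v He Hv [Hx _]; apply H2; auto; rewrite Eds; apply in_or_app; simpl;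
      destruct (in_app_or _ _ _ He); auto. }
  assert (Z : lsum (fun e => fst e * lam (fun v => snd e v /\ E2 (xof v))) ds =
       lsum (fun e => fst e * lam (fun v => snd e v /\ E2 (xof v))) (ds1 ++ ds2)).
  { rewrite Eds, !lsum_app; simpl.
    rewrite (m_empty V B1 lam B1T B1N lamA); [lra|].
    intros v [Hv [_ Hn]]; apply Hn; exists v; auto. }
  rewrite Z. lra.
Qed.



Definition seedA (q : Q V) : Prop :=
  (exists S, B1 S /\ q = (ind S, lam S)) \/
  (exists E, Bx E /\ q = (ind (fun v => E (xof v)), mu E)).

Lemma NF (l : list (R * Q V)) : (forall e, In e l -> seedA (snd e)) ->
  exists (ds : DS) (ks : KS), (forall e, In e ds -> B1 (snd e)) /\
    (forall v, lsum (fun e => ind (snd e) v) ds = 1) /\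
    (forall k, In k ks -> Bx (snd k)) /\
    (forall v, cf l v = lsum (fun e => fst e * ind (snd e) v) ds + Kf X ks (xof v)) /\
    cr l = lsum (fun e => fst e * lam (snd e)) ds + lsum (fun k => fst k * mu (snd k)) ks.
Proof.
induction l as [|[a q] l IH]; intro Hl.
- exists ((0, fun _ => True) :: nil), nil; simpl; repeat split.
  + intros e [<-|[]]; auto.
  + intro v; rewrite (ind_in _ v I); lra.
  + intros k [].
  + intro v; unfold Kf; simpl; lra.
  + lra.
- destruct IH as [ds [ks [HB [Hs [HK [Hf Hr]]]]]].
  { intros e He; apply Hl; simpl; auto. }
  assert (Hd : forall v, lsum (fun e => ind (snd e) v) ds <= 1) by (intro v; rewrite Hs; lra).
  assert (Hq := Hl (a, q) (or_introl eq_refl)); simpl in Hq.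
  destruct Hq as [[S [HS ->]]|[E [HE ->]]]; simpl.
  + exists (map (fun e => (fst e + a, fun v => snd e v /\ S v)) ds ++
            map (fun e => (fst e, fun v => snd e v /\ ~ S v)) ds), ks.
    repeat split.
    * intros e He; destruct (in_app_or _ _ _ He) as [H|H]; apply in_map_iff in H;
      destruct H as [e' [<- H]]; simpl; [apply B1I|apply B1I; [|apply B1N]]; auto.
    * intro v; rewrite lsum_app, !lsum_map, <- lsum_plus; simpl.
      rewrite <- (Hs v); apply lsum_ext; intros e He; apply ind_split.
    * auto.
    * intro v; rewrite Hf, lsum_app, !lsum_map; simpl.
      assert (E1 : lsum (fun e => (fst e + a) * ind (fun w => snd e w /\ S w) v) ds =
                   lsum (fun e => fst e * ind (fun w => snd e w /\ S w) v) ds +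
                   a * (lsum (fun e => ind (snd e) v) ds * ind S v)).
      { rewrite <- lsum_scalr, <- lsum_scal, <- lsum_plus; apply lsum_ext; intros e He.
        rewrite ind_and; lra. }
      rewrite E1, Hs.
      assert (E2 : lsum (fun e => fst e * ind (snd e) v) ds =
                   lsum (fun e => fst e * ind (fun w => snd e w /\ S w) v) ds +
                   lsum (fun e => fst e * ind (fun w => snd e w /\ ~ S w) v) ds).
      { rewrite <- lsum_plus; apply lsum_ext; intros e He; rewrite <- (ind_split _ (snd e) S v); lra. }
      rewrite E2; lra.
    * rewrite Hr, lsum_app, !lsum_map; simpl.
      assert (E1 : lsum (fun e => (fst e + a) * lam (fun w => snd e w /\ S w)) ds =
                   lsum (fun e => fst e * lam (fun w => snd e w /\ S w)) ds +
                   a * lsum (fun e => lam (fun w => snd e w /\ S w)) ds).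
      { rewrite <- lsum_scal, <- lsum_plus; apply lsum_ext; intros e He; lra. }
      rewrite E1, (LU ds S HB HS Hd).
      rewrite (fext _ lam (fun v => S v /\ exists e, In e ds /\ snd e v) S)
        by (intro v; split; [tauto|]; intro Hv; split; auto; apply sum_one_cov; auto).
      assert (E2 : lsum (fun e => fst e * lam (snd e)) ds =
                   lsum (fun e => fst e * lam (fun w => snd e w /\ S w)) ds +
                   lsum (fun e => fst e * lam (fun w => snd e w /\ ~ S w)) ds).
      { rewrite <- lsum_plus; apply lsum_ext; intros e He.
        rewrite (m_split V B1 lam B1N B1I lamA (snd e) S); auto; lra. }
      rewrite E2; lra.
  + exists ds, ((a, E) :: ks); repeat split; auto.
    * intros k [<-|Hk]; auto.
    * intro v; rewrite Hf; unfold Kf; simpl.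
      change (ind (fun v0 => E (xof v0)) v) with (ind E (xof v)); lra.
    * rewrite Hr; simpl; lra.
Qed.

Lemma seedA_cons : cons_ seedA.
Proof.
intros l Hl t Ht.
destruct (NF l Hl) as [ds [ks [HB [Hs [HK [Hf Hr]]]]]].
assert (Hd : forall v, lsum (fun e => ind (snd e) v) ds <= 1) by (intro v; rewrite Hs; lra).
assert (G := greedy (length ds) ds ks (fun _ => True) t eq_refl HB HK Bx1T Hd).
rewrite Hr.
rewrite mu1 in G.
rewrite (lsum_ext _ (fun e => fst e * lam (snd e)) (fun e => fst e * lam (fun v => snd e v /\ True)))
  by (intros e He; rewrite (fext _ lam (snd e) (fun v => snd e v /\ True)); [auto|intro; tauto]).
rewrite (lsum_ext _ (fun k => fst k * mu (snd k)) (fun k => fst k * mu (fun x => snd k x /\ True)))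
  by (intros k Hk; rewrite (fext _ mu (snd k) (fun x => snd k x /\ True)); [auto|intro; tauto]).
assert (lsum (fun e => fst e * lam (fun v => snd e v /\ True)) ds +
        lsum (fun k => fst k * mu (fun x => snd k x /\ True)) ks <= t * 1); [|lra].
apply G.
- intros v _; apply sum_one_cov; auto.
- intros e v He Hv _; rewrite <- (single ds e v He Hv (Hd v)), <- Hf; auto.
Qed.

Theorem amalgamation : exists w : (V -> Prop) -> R,
  w (fun _ => True) = 1 /\ (forall S, 0 <= w S) /\
  (forall S T, (forall v, S v -> T v -> False) -> w (fun v => S v \/ T v) = w S + w T) /\
  (forall S, B1 S -> w S = lam S) /\
  (forall E, Bx E -> w (fun v => E (xof v)) = mu E).
Proof.
destruct (ext_measure V seedA seedA_cons) as [w [H1 [H2 [H3 H4]]]].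
exists w; repeat split; auto.
- intros S HS; apply H4; left; exists S; auto.
- intros E HE; apply H4; right; exists E; auto.
Qed.

End Amalg.

Definition injf {A B : Type} (f : A -> B) := forall x y, f x = f y -> x = y.

Lemma compare (X Y : Type) : (exists f : X -> Y, injf f) \/ (exists g : Y -> X, injf g).
Proof.
set (P := fun G : (X * Y) -> Prop => forall a b, G a -> G b -> (fst a = fst b <-> snd a = snd b)).
destruct (@classical_sets.Zorn_bigcup _ P) as [G [HG Hmax]].
{ intros F HF Htot a b [A1 HA1 Ha] [A2 HA2 Hb].
  destruct (Htot A1 A2 HA1 HA2) as [H|H].
  - apply (HF A2 HA2); auto.
  - apply (HF A1 HA1); auto. }
destruct (classic (forall x, exists y, G (x, y))) as [Hx|Hx].
{ left; exists (fun x => proj1_sig (constructive_indefinite_description _ (Hx x))).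
  intros x x' E.
  destruct (constructive_indefinite_description _ (Hx x)) as [y Hy].
  destruct (constructive_indefinite_description _ (Hx x')) as [y' Hy']; simpl in E; subst.
  exact (proj2 (HG _ _ Hy Hy') eq_refl). }
destruct (classic (forall y, exists x, G (x, y))) as [Hy|Hy].
{ right; exists (fun y => proj1_sig (constructive_indefinite_description _ (Hy y))).
  intros y y' E.
  destruct (constructive_indefinite_description _ (Hy y)) as [x Hx'].
  destruct (constructive_indefinite_description _ (Hy y')) as [x' Hx'']; simpl in E; subst.
  exact (proj1 (HG _ _ Hx' Hx'') eq_refl). }
exfalso.
apply not_all_ex_not in Hx; destruct Hx as [x0 Hx0].
apply not_all_ex_not in Hy; destruct Hy as [y0 Hy0].
apply (Hmax (fun a => G a \/ a = (x0, y0))).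
- split; [intros a Ha; left; exact Ha|].
  intro H; apply Hx0; exists y0; apply H; right; reflexivity.
- intros [a1 a2] [b1 b2] [Ha|Ha] [Hb|Hb]; simpl.
  + exact (HG _ _ Ha Hb).
  + injection Hb as -> ->; split; intro E; subst.
    * exfalso; apply Hx0; exists a2; auto.
    * exfalso; apply Hy0; exists a1; auto.
  + injection Ha as -> ->; split; intro E; subst.
    * exfalso; apply Hx0; exists b2; auto.
    * exfalso; apply Hy0; exists b1; auto.
  + injection Ha as -> ->; injection Hb as -> ->; tauto.
Qed.

Section NatStuff.
Local Open Scope nat_scope.

Definition eqdec (K : Type) : forall x y : K, {x = y} + {x <> y} :=
  fun x y => excluded_middle_informative (x = y).

Lemma Dfin (K : Type) (Rp : K -> Prop) :
  ~ (exists r : nat -> K, injf r /\ forall n, Rp (r n)) ->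
  exists l, NoDup l /\ forall x, Rp x <-> In x l.
Proof.
intro Hn.
assert (Hc : exists l, forall x, Rp x -> In x l).
{ apply NNPP; intro Hc.
  assert (Hc' : forall l, exists x, Rp x /\ ~ In x l).
  { intro l; apply NNPP; intro H; apply Hc; exists l; intros x Hx.
    apply NNPP; intro H'; apply H; exists x; auto. }
  set (c := fun l => proj1_sig (constructive_indefinite_description _ (Hc' l))).
  assert (Hcp : forall l, Rp (c l) /\ ~ In (c l) l).
  { intro l; unfold c; destruct constructive_indefinite_description; auto. }
  set (LL := fix LL n := match n with 0 => nil | S n' => c (LL n') :: LL n' end).
  assert (Hin : forall m n, m < n -> In (c (LL m)) (LL n)).
  { intros m n; induction n as [|n IH]; intro H; [lia|].
    simpl; destruct (Nat.eq_dec m n) as [->|Hmn]; [left; auto|right; apply IH; lia]. }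
  apply Hn; exists (fun n => c (LL n)); split; [|intro n; apply Hcp].
  intros m n E; destruct (Nat.lt_total m n) as [H|[H|H]]; auto; exfalso.
  - apply (proj2 (Hcp (LL n))); rewrite <- E; apply Hin; auto.
  - apply (proj2 (Hcp (LL m))); rewrite E; apply Hin; auto. }
destruct Hc as [l Hl].
set (dR := fun x => if excluded_middle_informative (Rp x) then true else false).
exists (filter dR (nodup (eqdec K) l)); split.
- apply NoDup_filter, NoDup_nodup.
- intro x; rewrite filter_In, nodup_In; unfold dR; split.
  + intro H; split; auto; destruct excluded_middle_informative; tauto.
  + intros [_ H]; destruct excluded_middle_informative; auto; discriminate.
Qed.

Lemma nat_sum (X : Type) (h : nat -> X + X) : injf h -> exists g : nat -> X, injf g.
Proof.
intro Hh.
set (isl := fun u : X + X => match u with inl _ => True | inr _ => False end).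
destruct (classic (forall N, exists n, N <= n /\ isl (h n))) as [Hi|Hi].
- set (c := fun N => proj1_sig (constructive_indefinite_description _ (Hi N))).
  assert (Hcp : forall N, N <= c N /\ isl (h (c N))).
  { intro N; unfold c; destruct constructive_indefinite_description; auto. }
  set (e := fix e k := match k with 0 => c 0 | S k' => c (S (e k')) end).
  assert (Hinc : forall k, e k < e (S k)) by (intro k; simpl; destruct (Hcp (S (e k))); lia).
  assert (Hmon : forall k k', k < k' -> e k < e k').
  { intros k k'; induction k' as [|k' IH]; intro H; [lia|].
    destruct (Nat.eq_dec k k') as [->|Hne]; [apply Hinc|].
    specialize (Hinc k'); assert (e k < e k') by (apply IH; lia); lia. }
  assert (Hl : forall k, exists x, h (e k) = inl x).
  { intro k; assert (H := proj2 (Hcp (match k with 0 => 0 | S k' => S (e k') end))).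
    destruct k; simpl in *; destruct (h _) as [x|x] eqn:Ex; [exists x; auto| destruct H| exists x; auto | destruct H]. }
  exists (fun k => proj1_sig (constructive_indefinite_description _ (Hl k))).
  intros k k' E.
  destruct (constructive_indefinite_description _ (Hl k)) as [x Hx].
  destruct (constructive_indefinite_description _ (Hl k')) as [x' Hx']; simpl in E; subst x'.
  rewrite <- Hx' in Hx; apply Hh in Hx.
  destruct (Nat.lt_total k k') as [H|[H|H]]; auto; exfalso;
  [assert (e k < e k') by (apply Hmon; auto) | assert (e k' < e k) by (apply Hmon; auto)]; lia.
- apply not_all_ex_not in Hi; destruct Hi as [N HN].
  assert (Hr : forall n, exists x, h (N + n) = inr x).
  { intro n; destruct (h (N + n)) as [x|x] eqn:E; [|exists x; auto].
    exfalso; apply HN; exists (N + n); split; [lia|]; rewrite E; simpl; auto. }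
  exists (fun n => proj1_sig (constructive_indefinite_description _ (Hr n))).
  intros n n' E.
  destruct (constructive_indefinite_description _ (Hr n)) as [x Hx].
  destruct (constructive_indefinite_description _ (Hr n')) as [x' Hx']; simpl in E; subst x'.
  rewrite <- Hx' in Hx; apply Hh in Hx; lia.
Qed.

End NatStuff.

Section Double.
Local Open Scope nat_scope.
Variable K : Type.
Variable fN : nat -> K.
Hypothesis HfN : injf fN.

Lemma double : exists h : K + K -> K, injf h.
Proof.
set (Phi := fun F : (nat -> K) -> Prop => (forall s, F s -> injf s) /\
   (forall s s' m m', F s -> F s' -> s m = s' m' -> s = s')).
destruct (@classical_sets.Zorn_bigcup _ Phi) as [Fm [[HFi HFd] Hmax]].
{ intros F HF Htot; split.
  - intros s [A HA Hs]; exact (proj1 (HF A HA) s Hs).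
  - intros s s' m m' [A1 HA1 Hs] [A2 HA2 Hs'].
    destruct (Htot A1 A2 HA1 HA2) as [H|H].
    + apply (proj2 (HF A2 HA2)); auto.
    + apply (proj2 (HF A1 HA1)); auto. }
set (Rp := fun x => ~ exists s m, Fm s /\ s m = x).
assert (Hnoseq : ~ exists r : nat -> K, injf r /\ forall n, Rp (r n)).
{ intros [r [Hr HR]].
  apply (Hmax (fun s => Fm s \/ s = r)).
  - split; [intros s Hs; left; exact Hs|].
    intro H; apply (HR 0); exists r, 0; split; auto; apply H; right; reflexivity.
  - split.
    + intros s [Hs| ->]; auto.
    + intros s s' m m' [Hs| ->] [Hs'| ->] E.
      * exact (HFd s s' m m' Hs Hs' E).
      * exfalso; apply (HR m'); exists s, m; auto.
      * exfalso; apply (HR m); exists s', m'; auto.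
      * reflexivity. }
assert (Hne : exists s0, Fm s0).
{ apply NNPP; intro H; apply Hnoseq; exists fN; split; auto.
  intros n [s [m [Hs _]]]; apply H; exists s; auto. }
destruct Hne as [s0 Hs0].
destruct (Dfin K Rp Hnoseq) as [l [Hnd Hl]].
set (nl := length l).
set (t0 := fun j => if j <? nl then nth j l (fN 0) else s0 (j - nl)).
set (tt := fun s => if excluded_middle_informative (s = s0) then t0 else s).
assert (Hnth : forall j, j < nl -> Rp (nth j l (fN 0))).
{ intros j Hj; apply Hl; apply nth_In; auto. }
assert (Ht0 : forall a a', t0 a = t0 a' -> a = a').
{ intros a a'; unfold t0.
  destruct (Nat.ltb_spec a nl) as [Ha|Ha]; destruct (Nat.ltb_spec a' nl) as [Ha'|Ha']; intro E.
  - apply (proj1 (NoDup_nth l (fN 0)) Hnd); auto.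
  - exfalso; apply (Hnth a Ha); exists s0, (a' - nl); auto.
  - exfalso; apply (Hnth a' Ha'); exists s0, (a - nl); auto.
  - apply HFi in E; auto; lia. }
assert (TT : forall s s' a a', Fm s -> Fm s' -> tt s a = tt s' a' -> s = s' /\ a = a').
{ intros s s' a a' Hs Hs'; unfold tt.
  destruct (excluded_middle_informative (s = s0)) as [->|Hn];
  destruct (excluded_middle_informative (s' = s0)) as [->|Hn']; intro E.
  - split; auto.
  - exfalso; unfold t0 in E; destruct (Nat.ltb_spec a nl) as [Ha|Ha].
    + apply (Hnth a Ha); exists s', a'; auto.
    + apply Hn'; symmetry; apply (HFd s0 s' (a - nl) a'); auto.
  - exfalso; unfold t0 in E; destruct (Nat.ltb_spec a' nl) as [Ha|Ha].
    + apply (Hnth a' Ha); exists s, a; auto.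
    + apply Hn; apply (HFd s s0 a (a' - nl)); auto.
  - assert (s = s') by (apply (HFd s s' a a'); auto); subst s'; split; auto.
    apply (HFi s); auto. }
assert (Hdec : forall x, exists p : (nat -> K) * nat, Fm (fst p) /\ tt (fst p) (snd p) = x).
{ intro x; destruct (classic (Rp x)) as [Hx|Hx].
  - apply Hl in Hx; destruct (In_nth l x (fN 0) Hx) as [j [Hj Ej]].
    exists (s0, j); simpl; split; auto; unfold tt.
    destruct excluded_middle_informative as [_|]; [|tauto].
    unfold t0; destruct (Nat.ltb_spec j nl); [auto|unfold nl in *; lia].
  - apply NNPP in Hx; destruct Hx as [s [m [Hs <-]]].
    destruct (excluded_middle_informative (s = s0)) as [->|Hn].
    + exists (s0, nl + m); simpl; split; auto; unfold tt.
      destruct excluded_middle_informative as [_|]; [|tauto].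
      unfold t0; destruct (Nat.ltb_spec (nl + m) nl); [lia|f_equal; lia].
    + exists (s, m); simpl; split; auto; unfold tt.
      destruct excluded_middle_informative; tauto. }
set (pos := fun x => proj1_sig (constructive_indefinite_description _ (Hdec x))).
assert (Hpos : forall x, Fm (fst (pos x)) /\ tt (fst (pos x)) (snd (pos x)) = x).
{ intro x; unfold pos; destruct constructive_indefinite_description; auto. }
exists (fun u => match u with
         | inl x => tt (fst (pos x)) (2 * snd (pos x))
         | inr x => tt (fst (pos x)) (2 * snd (pos x) + 1) end).
assert (Hpi : forall x x', fst (pos x) = fst (pos x') -> snd (pos x) = snd (pos x') -> x = x').
{ intros x x' E1 E2; rewrite <- (proj2 (Hpos x)), <- (proj2 (Hpos x')), E1, E2; auto. }
intros [x|x] [x'|x'] E;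
  destruct (TT _ _ _ _ (proj1 (Hpos x)) (proj1 (Hpos x')) E) as [E1 E2];
  try (f_equal; apply Hpi; auto; lia); lia.
Qed.

End Double.

Lemma sig_eq (T : Type) (P : T -> Prop) (x y : {x | P x}) : proj1_sig x = proj1_sig y -> x = y.
Proof. destruct x as [x Hx], y as [y Hy]; simpl; intros ->; f_equal; apply proof_irrelevance. Qed.

Section Union.
Variables (T K : Type) (A A' : T -> Prop).

Definition splitU (x : {x | A x \/ A' x}) : {x | A x} + {x | A' x} :=
  match excluded_middle_informative (A (proj1_sig x)) with
  | left H => inl (exist _ _ H)
  | right H => inr (exist _ _ (or_ind (fun a => False_ind _ (H a)) (fun b => b) (proj2_sig x)))
  end.

Lemma splitU_inj : injf splitU.
Proof.
intros x y; unfold splitU.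
destruct excluded_middle_informative; destruct excluded_middle_informative; intro E;
  try discriminate; injection E; intro; apply sig_eq; auto.
Qed.

Lemma card_lt_union (fN : nat -> K) : injf fN -> card_lt {x | A x} K -> card_lt {x | A' x} K ->
  card_lt {x | A x \/ A' x} K.
Proof.
intros HfN [[fA HfA] HnA] [[fA' HfA'] HnA'].
destruct (double K fN HfN) as [h Hh].
split.
- exists (fun x => h (match splitU x with inl a => inl (fA a) | inr b => inr (fA' b) end)).
  intros x y E; apply Hh in E; apply splitU_inj.
  destruct (splitU x), (splitU y); try discriminate; injection E; intro E'; f_equal; auto.
- intros [g Hg].
  set (k := fun u => splitU (g u)).
  assert (Hk : injf k) by (intros u v E; apply Hg, splitU_inj, E).
  destruct (compare {x | A x} {x | A' x}) as [[j Hj]|[j Hj]].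
  + set (k' := fun u => match k u with inl a => inl (j a) | inr b => inr b end
                : {x | A' x} + {x | A' x}).
    assert (Hk' : injf k').
    { intros u v E; apply Hk; unfold k' in E; destruct (k u), (k v); try discriminate; injection E; intro E';
      f_equal; auto. }
    destruct (classic (exists r : nat -> {x | A' x}, injf r)) as [[r Hr]|Hn].
    * destruct (double _ r Hr) as [d Hd].
      apply HnA'; exists (fun u => d (k' u)); intros u v E; apply Hk', Hd, E.
    * apply Hn; apply (nat_sum _ (fun n => k' (fN n))); intros m n E; apply HfN, Hk', E.
  + set (k' := fun u => match k u with inl a => inl a | inr b => inr (j b) end
                : {x | A x} + {x | A x}).
    assert (Hk' : injf k').
    { intros u v E; apply Hk; unfold k' in E; destruct (k u), (k v); try discriminate; injection E; intro E';
      f_equal; auto. }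
    destruct (classic (exists r : nat -> {x | A x}, injf r)) as [[r Hr]|Hn].
    * destruct (double _ r Hr) as [d Hd].
      apply HnA; exists (fun u => d (k' u)); intros u v E; apply Hk', Hd, E.
    * apply Hn; apply (nat_sum _ (fun n => k' (fN n))); intros m n E; apply HfN, Hk', E.
Qed.
End Union.

Close Scope R_scope.
From mathcomp Require Import all_boot.

Set Implicit Arguments.
Unset Strict Implicit.
Unset Printing Implicit Defensive.

Definition nil0 (T : Type) : 'I_0 -> T.
Proof. move=> [m H]; exfalso; by rewrite ltn0 in H. Defined.

Lemma setext (T : Type) (S S' : T -> Prop) : (forall a, S a <-> S' a) -> S = S'.
Proof. move=> H; apply: functional_extensionality => a; apply: propositional_extensionality; exact: H. Qed.

Section Syn.
Variable L : language.

Fixpoint rent m m' (r : 'I_m -> 'I_m') (t : term L m) : term L m' :=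
  match t with
  | tvar i => tvar L (r i)
  | tfun f ts => tfun (fun i => rent r (ts i))
  end.

Definition liftr m m' (r : 'I_m -> 'I_m') : 'I_m.+1 -> 'I_m'.+1 :=
  fun i => match unlift ord_max i with Some j => lift ord_max (r j) | None => ord_max end.

Fixpoint renf m (phi : form L m) : forall m', ('I_m -> 'I_m') -> form L m' :=
  match phi in form _ k return forall m', ('I_k -> 'I_m') -> form L m' with
  | feq _ t1 t2 => fun m' r => feq (rent r t1) (rent r t2)
  | Defs.frel _ rr ts => fun m' r => Defs.frel (fun i => rent r (ts i))
  | ffalse _ => fun m' r => ffalse L m'
  | fneg _ q => fun m' r => fneg (renf q r)
  | fand _ q1 q2 => fun m' r => fand (renf q1 r) (renf q2 r)
  | fex _ q => fun m' r => fex (renf q (liftr r))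
  end.

Lemma eval_rent (M : structure L) m m' (r : 'I_m -> 'I_m') (e : 'I_m' -> M) t :
  eval e (rent r t) = eval (fun i => e (r i)) t.
Proof.
elim: t => [i|f ts IH] //=; congr (finterp _); apply: functional_extensionality => i; exact: IH.
Qed.

Lemma ext_liftr (M : Type) m m' (r:'I_m -> 'I_m') (e : 'I_m' -> M) u i :
  ext e u (liftr r i) = ext (fun j => e (r j)) u i.
Proof.
rewrite /liftr /ext; case: (unlift ord_max i) => [j|] /=; first by rewrite liftK.
by rewrite unlift_none.
Qed.

Lemma sat_renf (M : structure L) m (phi : form L m) :
  forall m' (r : 'I_m -> 'I_m') (e : 'I_m' -> M), sat (renf phi r) e <-> sat phi (fun i => e (r i)).
Proof.
elim: phi => {m} [m t1 t2|m rr ts|m|m q IH|m q1 IH1 q2 IH2|m q IH] m' r e /=.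
- by rewrite !eval_rent.
- have -> : (fun i => eval e (rent r (ts i))) = (fun i => eval (fun j => e (r j)) (ts i)).
    apply: functional_extensionality => i; exact: eval_rent.
  by [].
- by [].
- by rewrite IH.
- by rewrite IH1 IH2.
- split=> [[u Hu]|[u Hu]]; exists u.
  + move/IH: Hu; congr (sat q _); apply: functional_extensionality => i; exact: ext_liftr.
  + apply/IH; move: Hu; congr (sat q _); apply: functional_extensionality => i; symmetry; exact: ext_liftr.
Qed.

End Syn.
Section Tcat.
Variable T : Type.

Lemma tcatL m k (a : 'I_m -> T) (c : 'I_k -> T) i : tcat a c (lshift k i) = a i.
Proof. by rewrite /tcat (unsplitK (inl _ i)). Qed.
Lemma tcatR m k (a : 'I_m -> T) (c : 'I_k -> T) i : tcat a c (rshift m i) = c i.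
Proof. by rewrite /tcat (unsplitK (inr _ i)). Qed.

Lemma tcat_lo m k (a : 'I_m -> T) (c : 'I_k -> T) i (j : 'I_m) :
  val i = val j -> tcat a c i = a j.
Proof. move=> H; have -> : i = lshift k j by apply: val_inj. exact: tcatL. Qed.
Lemma tcat_hi m k (a : 'I_m -> T) (c : 'I_k -> T) i (j : 'I_k) :
  val i = m + val j -> tcat a c i = c j.
Proof. move=> H; have -> : i = rshift m j by apply: val_inj. exact: tcatR. Qed.

Lemma ext_lo n (e : 'I_n -> T) u (i : 'I_n.+1) (j : 'I_n) : val i = val j -> ext e u i = e j.
Proof.
move=> H; have -> : i = lift ord_max j.
  by apply: val_inj; rewrite /= /bump leqNgt ltn_ord H.
by rewrite /ext liftK.
Qed.
Lemma ext_hi n (e : 'I_n -> T) u (i : 'I_n.+1) : val i = n -> ext e u i = u.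
Proof. move=> H; have -> : i = ord_max by apply: val_inj. by rewrite /ext unlift_none. Qed.

Lemma tcat_eta m k (v : 'I_(m + k) -> T) :
  v = tcat (fun i => v (lshift k i)) (fun j => v (rshift m j)).
Proof.
apply: functional_extensionality => i; rewrite /tcat.
by case: split_ordP => j ->.
Qed.

End Tcat.
Lemma splitL m k (j : 'I_m) : split (lshift k j) = inl j.
Proof. exact: (unsplitK (inl _ j)). Qed.
Lemma splitR m k (j : 'I_k) : split (rshift m j) = inr j.
Proof. exact: (unsplitK (inr _ j)). Qed.

Section Exs.
Variable L : language.

Fixpoint exs (m p : nat) {struct p} : form L (m + p) -> form L m :=
  match p return form L (m + p) -> form L m with
  | 0 => fun phi => renf phi (cast_ord (addn0 m))
  | p'.+1 => fun phi => exs (fex (renf phi (cast_ord (addnS m p'))))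
  end.

Lemma sat_exs (M : structure L) m p (phi : form L (m + p)) (e : 'I_m -> M) :
  sat (exs phi) e <-> exists w : 'I_p -> M, sat phi (tcat e w).
Proof.
elim: p phi e => [|p IH] phi e /=.
- rewrite sat_renf.
  have E : forall w : 'I_0 -> M, (fun i => e (cast_ord (addn0 m) i)) = tcat e w.
    move=> w; apply: functional_extensionality => i; case: (split_ordP i) => j ->.
    + by rewrite tcatL; congr e; apply: val_inj.
    + by move: (ltn_ord j); rewrite ltn0.
  split; first by move=> H; exists (nil0 M); rewrite -E.
  by move=> [w]; rewrite -E.
- rewrite IH; split.
  + move=> [w [u Hu]]; exists (ext w u); move/sat_renf: Hu; congr (sat phi _).
    apply: functional_extensionality => i.
    case: (ltnP i m) => H1.
    * rewrite (@ext_lo _ _ _ _ _ (Ordinal (leq_trans H1 (leq_addr p m)))) /=; last by [].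
      by rewrite (tcat_lo _ _ (j := Ordinal H1)) // (tcat_lo _ _ (j := Ordinal H1)).
    * case: (ltnP i (m + p)) => H2.
      - have H3 : i - m < p by rewrite ltn_subLR.
        rewrite (@ext_lo _ _ _ _ _ (Ordinal H2)) //.
        rewrite (tcat_hi _ _ (j := Ordinal H3)) /=; last by rewrite subnKC.
        rewrite (tcat_hi _ _ (j := Ordinal (leq_trans H3 (leqnSn p)))) /=; last by rewrite subnKC.
        by rewrite (@ext_lo _ _ _ _ _ (Ordinal H3)).
      - have Hi : val i = m + p by apply/eqP; rewrite eqn_leq H2 -ltnS -addnS ltn_ord.
        rewrite ext_hi /=; last by [].
        have H3 : p < p.+1 by [].
        rewrite (tcat_hi _ _ (j := Ordinal H3)) /=; last by [].
        by rewrite ext_hi.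
  + move=> [w Hw]; exists (fun j => w (widen_ord (leqnSn p) j)), (w ord_max).
    apply/sat_renf; move: Hw; congr (sat phi _).
    apply: functional_extensionality => i.
    case: (ltnP i m) => H1.
    * rewrite (tcat_lo _ _ (j := Ordinal H1)) //.
      rewrite (@ext_lo _ _ _ _ _ (Ordinal (leq_trans H1 (leq_addr p m)))) /=; last by [].
      by rewrite (tcat_lo _ _ (j := Ordinal H1)).
    * have H3 : i - m < p.+1 by rewrite ltn_subLR // -addnS ltn_ord.
      rewrite (tcat_hi _ _ (j := Ordinal H3)) /=; last by rewrite subnKC.
      case: (ltnP i (m + p)) => H2.
      - have H4 : i - m < p by rewrite ltn_subLR.
        rewrite (@ext_lo _ _ _ _ _ (Ordinal H2)) //.
        rewrite (tcat_hi _ _ (j := Ordinal H4)) /=; last by rewrite subnKC.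
        by congr w; apply: val_inj.
      - have Hi : val i = m + p by apply/eqP; rewrite eqn_leq H2 -ltnS -addnS ltn_ord.
        rewrite ext_hi /=; last by [].
        by congr w; apply: val_inj => /=; rewrite Hi addKn.
Qed.

End Exs.
Section Defin.
Variables (L : language) (M : structure L) (C : M -> Prop).

Lemma def_eq n (S S' : ('I_n -> M) -> Prop) :
  definable C S -> (forall a, S a <-> S' a) -> definable C S'.
Proof. by move=> H E; rewrite -(setext E). Qed.

Lemma defT n : definable C (fun _ : 'I_n -> M => True).
Proof.
exists 0, (fneg (ffalse L (n + 0))), (nil0 M); split.
- by move=> i; move: (ltn_ord i); rewrite ltn0.
- by apply: setext => a; rewrite /defset /=; tauto.
Qed.

Lemma defN n (S : ('I_n -> M) -> Prop) : definable C S -> definable C (fun a => ~ S a).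
Proof. by move=> [k [phi [c [Hc ->]]]]; exists k, (fneg phi), c. Qed.

Lemma defI n (S S' : ('I_n -> M) -> Prop) :
  definable C S -> definable C S' -> definable C (fun a => S a /\ S' a).
Proof.
move=> [k1 [phi [c [Hc ->]]]] [k2 [psi [d [Hd ->]]]].
pose r1 (i : 'I_(n + k1)) : 'I_(n + (k1 + k2)) :=
  match split i with inl j => lshift (k1 + k2) j | inr j => rshift n (lshift k2 j) end.
pose r2 (i : 'I_(n + k2)) : 'I_(n + (k1 + k2)) :=
  match split i with inl j => lshift (k1 + k2) j | inr j => rshift n (rshift k1 j) end.
exists (k1 + k2), (fand (renf phi r1) (renf psi r2)), (tcat c d); split.
- by move=> i; rewrite /tcat; case: (split i) => j; [exact: Hc | exact: Hd].
- apply: setext => a; rewrite /defset /= !sat_renf.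
  have -> : (fun i => tcat a (tcat c d) (r1 i)) = tcat a c.
    apply: functional_extensionality => i; case: (split_ordP i) => j ->;
    by rewrite /r1 ?splitL ?splitR ?tcatL ?tcatR ?tcatL ?tcatR.
  have -> : (fun i => tcat a (tcat c d) (r2 i)) = tcat a d.
    apply: functional_extensionality => i; case: (split_ordP i) => j ->;
    by rewrite /r2 ?splitL ?splitR ?tcatL ?tcatR ?tcatL ?tcatR.
  by [].
Qed.

Lemma defU n (S S' : ('I_n -> M) -> Prop) :
  definable C S -> definable C S' -> definable C (fun a => S a \/ S' a).
Proof.
move=> H1 H2; apply: (def_eq (defN (defI (defN H1) (defN H2)))) => a; tauto.
Qed.

Lemma defF n : definable C (fun _ : 'I_n -> M => False).
Proof. apply: (def_eq (defN (defT n))) => a; tauto. Qed.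

Lemma defCyl n p (S : ('I_n -> M) -> Prop) :
  definable C S -> definable C (fun v : 'I_(n + p) -> M => S (fun i => v (lshift p i))).
Proof.
move=> [k [phi [c [Hc ->]]]].
pose r (i : 'I_(n + k)) : 'I_(n + p + k) :=
  match split i with inl j => lshift k (lshift p j) | inr j => rshift (n + p) j end.
exists k, (renf phi r), c; split => //.
apply: setext => v; rewrite /defset sat_renf.
have -> : (fun i => tcat v c (r i)) = tcat (fun i => v (lshift p i)) c.
  apply: functional_extensionality => i; case: (split_ordP i) => j ->;
  by rewrite /r ?splitL ?splitR ?tcatL ?tcatR ?tcatL ?tcatR.
by [].
Qed.

Lemma defProj n p (S : ('I_(n + p) -> M) -> Prop) :
  definable C S -> definable C (fun x : 'I_n -> M => exists y : 'I_p -> M, S (tcat x y)).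
Proof.
move=> [k [phi [c [Hc ->]]]].
pose r (i : 'I_(n + p + k)) : 'I_(n + k + p) :=
  match split i with
  | inl j => match split j with inl j1 => lshift p (lshift k j1) | inr j2 => rshift (n + k) j2 end
  | inr j => lshift p (rshift n j) end.
exists k, (exs (renf phi r)), c; split => //.
apply: setext => x; rewrite /defset sat_exs.
have E : forall y, (fun i => tcat (tcat x c) y (r i)) = tcat (tcat x y) c.
  move=> y; apply: functional_extensionality => i; case: (split_ordP i) => j ->.
  + rewrite /r splitL; case: (split_ordP j) => j1 ->;
    by rewrite ?splitL ?splitR ?tcatL ?tcatR ?tcatL ?tcatR.
  + by rewrite /r splitR !tcatL !tcatR.
by split=> [[y Hy]|[y Hy]]; exists y; [rewrite sat_renf E | rewrite -E -sat_renf].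
Qed.

End Defin.

Lemma nil0P (T : Type) (P : T -> Prop) (j : 'I_0) : P (nil0 T j).
Proof. exfalso; move: (ltn_ord j); by rewrite ltn0. Qed.

Lemma card_lt_fin (T K : Type) k (b : 'I_k -> T) (fN : nat -> K) :
  injf fN -> card_lt {x | exists i, x = b i} K.
Proof.
move=> HfN.
have Hc : forall x : {x | exists i, x = b i}, exists i, proj1_sig x = b i by case.
pose ix x := proj1_sig (constructive_indefinite_description _ (Hc x)).
have Hix : forall x, proj1_sig x = b (ix x).
  by move=> x; rewrite /ix; case: constructive_indefinite_description.
split.
- exists (fun x => fN (ix x)) => x y /HfN E; apply: sig_eq; rewrite !Hix; congr b; exact: val_inj.
- move=> [g Hg].
  pose h (m : 'I_k.+1) : 'I_k := ix (g (fN m)).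
  have Hh : injective h.
    move=> m m' E; apply: val_inj; apply: HfN; apply: Hg; apply: sig_eq.
    by rewrite !Hix; exact: (congr1 b E).
  by move: (@leq_card _ _ h Hh); rewrite !card_ord ltnn.
Qed.

Section Model.
Variables (L : language) (U : structure L).

Lemma ext_comp (f : U -> U) n (e : 'I_n -> U) u :
  (fun i => f (ext e u i)) = ext (fun i => f (e i)) (f u).
Proof. apply: functional_extensionality => i; rewrite /ext; by case: (unlift ord_max i). Qed.

Lemma eval_aut s : automorphism s ->
  forall n (e : 'I_n -> U) t, eval (fun i => s (e i)) t = s (eval e t).
Proof.
move=> [_ [Hf _]] n e; elim => [i|f ts IH] //=.
rewrite Hf; congr (finterp _); apply: functional_extensionality => i; exact: IH.
Qed.

Lemma sat_aut s : automorphism s ->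
  forall n (phi : form L n) (e : 'I_n -> U), sat phi (fun i => s (e i)) <-> sat phi e.
Proof.
move=> Hs; have [Hb [Hf Hr]] := Hs; have [g sg gs] := Hb.
move=> n phi; elim: phi => {n} [n t1 t2|n r ts|n|n q IH|n q1 IH1 q2 IH2|n q IH] e /=.
- rewrite !eval_aut //; split => [/(can_inj sg)|->] //.
- have -> : (fun i => eval (fun j => s (e j)) (ts i)) = (fun i => s (eval e (ts i))).
    by apply: functional_extensionality => i; rewrite eval_aut.
  by rewrite -Hr.
- by [].
- by rewrite IH.
- by rewrite IH1 IH2.
- split => [[u Hu]|[u Hu]].
  + exists (g u); apply/IH; rewrite ext_comp gs; exact: Hu.
  + exists (s u); rewrite -ext_comp; apply/IH; exact: Hu.
Qed.

Lemma defset_pull s g : automorphism s -> cancel s g -> cancel g s ->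
  forall n k (phi : form L (n + k)) (c : 'I_k -> U),
  (fun v : 'I_n -> U => defset phi c (fun i => s (v i))) = defset phi (fun j => g (c j)).
Proof.
move=> Hs sg gs n k phi c; apply: setext => v.
rewrite /defset -(sat_aut Hs phi (tcat v (fun j => g (c j)))).
have -> : (fun i => s (tcat v (fun j => g (c j)) i)) = tcat (fun i => s (v i)) c.
  by apply: functional_extensionality => i; rewrite /tcat; case: (split i) => j //; rewrite gs.
by [].
Qed.

Lemma same_type_g s g (A : U -> Prop) : automorphism s -> cancel s g -> cancel g s ->
  (forall x, A x -> s x = x) -> forall k (d : 'I_k -> U), same_type A (fun j => g (d j)) d.
Proof.
move=> Hs sg gs HA k d l psi a Ha.
rewrite -(sat_aut Hs psi (tcat (fun j => g (d j)) a)).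
have -> : (fun i => s (tcat (fun j => g (d j)) a i)) = tcat d a.
  apply: functional_extensionality => i; rewrite /tcat; case: (split i) => j; first by rewrite gs.
  exact: HA.
by [].
Qed.

Section Sigma.
Variables (A : U -> Prop) (kb : nat) (b c : 'I_kb -> U).
Hypothesis Hst : same_type A b c.

Definition fmap (x : U) : U :=
  match excluded_middle_informative (exists i, x = b i /\ ~ A x) with
  | left H => c (proj1_sig (constructive_indefinite_description _ H))
  | right _ => x end.

Lemma fmapA x : A x -> fmap x = x.
Proof.
move=> HA; rewrite /fmap; case: excluded_middle_informative => [H|//].
exfalso; have [i [_ Hn]] := H; exact: Hn HA.
Qed.

Lemma st_eq i i' : b i = b i' -> c i = c i'.
Proof.
move=> E.
have := Hst (feq (tvar L (lshift 0 i)) (tvar L (lshift 0 i'))) (fun j => @nil0P U A j).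
by rewrite /= !tcatL => -[H _]; apply: H.
Qed.

Lemma st_fix i : A (b i) -> c i = b i.
Proof.
move=> HA.
have := Hst (feq (tvar L (lshift 1 i)) (tvar L (rshift kb (ord0 : 'I_1)))) (fun _ : 'I_1 => HA).
by rewrite /= !tcatL !tcatR => -[H _]; apply: H.
Qed.

Lemma fmap_b i : fmap (b i) = c i.
Proof.
case: (classic (A (b i))) => HA.
- by rewrite fmapA // st_fix.
- rewrite /fmap; case: excluded_middle_informative => [H|H].
  + case: constructive_indefinite_description => i' [Ei' _] /=; symmetry; exact: st_eq.
  + by exfalso; apply: H; exists i.
Qed.

Lemma elem : elementary_on (fun x => A x \/ exists i, x = b i) fmap.
Proof.
move=> k phi a Ha.
suff [l [a'' [Ha'' Hj]]] : exists l (a'' : 'I_l -> U), (forall i, A (a'' i)) /\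
    forall j, exists t, a j = tcat b a'' t /\ fmap (a j) = tcat c a'' t.
  pose r j := proj1_sig (constructive_indefinite_description _ (Hj j)).
  have Hr : forall j, a j = tcat b a'' (r j) /\ fmap (a j) = tcat c a'' (r j).
    by move=> j; rewrite /r; case: constructive_indefinite_description.
  have E1 : a = (fun j => tcat b a'' (r j)).
    by apply: functional_extensionality => j; case: (Hr j).
  have E2 : (fun j => fmap (a j)) = (fun j => tcat c a'' (r j)).
    by apply: functional_extensionality => j; case: (Hr j).
  rewrite E2 {1}E1 -!sat_renf; exact: Hst.
case: (classic (exists a0, A a0)) => [[a0 HA0]|HnA].
- pose a'' j := if excluded_middle_informative (A (a j)) then a j else a0.
  exists k, a''; split.
  + by move=> i; rewrite /a''; case: excluded_middle_informative.
  + move=> j; case: (classic (A (a j))) => HAj.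
    * exists (rshift kb j); rewrite !tcatR fmapA // /a''.
      by case: excluded_middle_informative.
    * case: (Ha j) => [//|[i ->]]; exists (lshift k i); by rewrite !tcatL fmap_b.
- exists 0, (nil0 U); split; first by move=> i; exact: (@nil0P U A i).
  move=> j; case: (Ha j) => [HA|[i ->]]; first by exfalso; apply: HnA; exists (a j).
  by exists (lshift 0 i); rewrite !tcatL fmap_b.
Qed.

Lemma get_sigma (kappa : Type) : monster U kappa -> small kappa A ->
  exists s, automorphism s /\ (forall x, A x -> s x = x) /\ forall i, s (b i) = c i.
Proof.
move=> [[fN HfN] [_ [_ Hsh]]] HsA.
have HsD : small kappa (fun x => A x \/ exists i, x = b i).
  exact: (card_lt_union _ _ _ _ fN HfN HsA (card_lt_fin b HfN)).
have [s [Hs Hsf]] := Hsh _ _ HsD elem.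
exists s; split=> //; split.
- by move=> x HA; rewrite Hsf ?fmapA //; left.
- by move=> i; rewrite Hsf ?fmap_b //; right; exists i.
Qed.

End Sigma.
End Model.

Section Glue.
Variables (L : language) (U : structure L) (n p : nat).
Variable mu : (('I_n -> U) -> Prop) -> R.
Hypothesis Hmu : keisler (@allM L U) mu.

Lemma def_weak (C C' : U -> Prop) k (S : ('I_k -> U) -> Prop) :
  (forall x, C x -> C' x) -> definable C S -> definable C' S.
Proof. move=> H [kk [phi [c [Hc ->]]]]; exists kk, phi, c; split => // i; exact: H. Qed.

Lemma amalg_inst (C : U -> Prop) (lam : (('I_(n + p) -> U) -> Prop) -> R) :
  keisler C lam -> agree C (proj_x lam) mu ->
  exists w : (('I_(n + p) -> U) -> Prop) -> R,
    keisler (@allM L U) w /\ (forall S, Rle R0 (w S)) /\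
    (forall S T, (forall v, S v -> T v -> False) -> w (fun v => S v \/ T v) = Rplus (w S) (w T)) /\
    agree C w lam /\ agree (@allM L U) (proj_x w) mu.
Proof.
move=> [l1 [l0 lA]] Hag; have [m1 [m0 mA]] := Hmu.
have [v0 _] : exists v : 'I_(n + p) -> U, True.
  apply: NNPP => Hn.
  have := m_empty _ (definable C) lam (@defT L U C (n + p)) (@defN L U C (n + p)) lA
            (fun _ => True) (fun w _ => Hn (ex_intro _ w I)).
  rewrite l1; exact: R1_neq_R0.
pose xof (v : 'I_(n + p) -> U) : 'I_n -> U := fun i => v (lshift p i).
have B1T : definable C (fun _ : 'I_(n + p) -> U => True) by exact: defT.
have B1N : forall S : ('I_(n + p) -> U) -> Prop, definable C S -> definable C (fun w => ~ S w)
  by move=> S; exact: defN.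
have B1I : forall S T : ('I_(n + p) -> U) -> Prop, definable C S -> definable C T ->
   definable C (fun w => S w /\ T w) by move=> S T; exact: defI.
have BxT : definable (@allM L U) (fun _ : 'I_n -> U => True) by exact: defT.
have BxN : forall S : ('I_n -> U) -> Prop, definable (@allM L U) S -> definable (@allM L U) (fun w => ~ S w)
  by move=> S; exact: defN.
have BxI : forall S T : ('I_n -> U) -> Prop, definable (@allM L U) S -> definable (@allM L U) T ->
   definable (@allM L U) (fun w => S w /\ T w) by move=> S T; exact: defI.
have Bx1T : definable C (fun _ : 'I_n -> U => True) by exact: defT.
have Bx1N : forall S : ('I_n -> U) -> Prop, definable C S -> definable C (fun w => ~ S w)
  by move=> S; exact: defN.
have Bx1I : forall S T : ('I_n -> U) -> Prop, definable C S -> definable C T ->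
   definable C (fun w => S w /\ T w) by move=> S T; exact: defI.
have Bx1sub : forall E : ('I_n -> U) -> Prop, definable C E -> definable (@allM L U) E
  by move=> E; apply: def_weak.
have B1cyl : forall E : ('I_n -> U) -> Prop, definable C E -> definable C (fun v => E (xof v))
  by move=> E HE; exact: defCyl.
have B1proj : forall D : ('I_(n + p) -> U) -> Prop, definable C D ->
    definable C (fun x => exists v, D v /\ xof v = x).
  move=> D HD; apply: (def_eq (defProj HD)) => x; split.
  - move=> [y Hy]; exists (tcat x y); split => //.
    by apply: functional_extensionality => i; rewrite /xof tcatL.
  - move=> [v [Hv <-]]; exists (fun j => v (rshift n j)); by rewrite -tcat_eta.
have xsurj : forall x, exists v, xof v = x.
  move=> x; exists (tcat x (fun j => v0 (rshift n j))).
  by apply: functional_extensionality => i; rewrite /xof tcatL.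
have [w [w1 [w0 [wA [wB wX]]]]] := @amalgamation _ _ xof (definable C) (definable C) (definable (@allM L U)) lam mu B1T B1N B1I BxT BxN BxI Bx1T Bx1N Bx1I Bx1sub
   B1cyl B1proj xsurj l0 lA m1 m0 mA Hag.
exists w; split.
  split; first exact: w1.
  split; first by move=> S _; exact: w0.
  by move=> S T _ _; exact: wA.
split; first exact: w0.
split; first exact: wA.
split; first exact: wB.
by move=> S HS; exact: wX.
Qed.


Lemma part1 (kappa : Type) (HU : monster U kappa) (nu : (('I_p -> U) -> Prop) -> R)
  (A : U -> Prop) : small kappa A -> invariant_over A mu -> geE A mu nu -> invariant_over A nu.
Proof.
move=> HsA Hinv [lam [Hk [Hag Hw]]].
have [w [wK [w0 [wA [wB wX]]]]] := amalg_inst Hk Hag.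
move=> k phi b c Hst.
have [s [Hs [HsA' Hsb]]] := get_sigma Hst HU HsA.
have [g sg gs] := proj1 Hs.
have HgA : forall x, A x -> g x = x by move=> x Hx; rewrite -{1}(HsA' x Hx) sg.
pose w' S := w (fun v : 'I_(n + p) -> U => S (fun i => s (v i))).
have Hw' : agree (@allM L U) (proj_y w') nu.
  apply: Hw.
  - split; first exact: (proj1 wK).
    split; first by move=> S _; exact: w0.
    move=> S T _ _ HST; rewrite /w'; apply: wA => v; apply: HST.
  - move=> S [kk [psi [d [Hd ->]]]]; rewrite /w' (defset_pull Hs sg gs).
    have -> : (fun j => g (d j)) = d by apply: functional_extensionality => j; exact: HgA.
    apply: wB; by exists kk, psi, d.
  - move=> S [kk [psi [d [_ ->]]]]; rewrite /proj_x /w'.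
    have E := defset_pull Hs sg gs psi d.
    have -> : (fun v : 'I_(n + p) -> U => defset psi d (fun i => s (v (lshift p i)))) =
              (fun v => defset psi (fun j => g (d j)) (fun i => v (lshift p i))).
      apply: functional_extensionality => v.
      exact: (congr1 (fun F => F (fun i => v (lshift p i))) E).
    have := wX (defset psi (fun j => g (d j))); rewrite /proj_x => ->; last by exists kk, psi, (fun j => g (d j)).
    apply: Hinv; exact: (same_type_g Hs sg gs HsA').
have Hw0 := Hw w wK wB wX.
have Dc : definable (@allM L U) (defset phi c) by exists k, phi, c.
have Db : definable (@allM L U) (defset phi b) by exists k, phi, b.
rewrite -(Hw0 _ Db) -(Hw' _ Dc) /proj_y /w'.
congr w; apply: functional_extensionality => v.
have E := defset_pull Hs sg gs phi c.
rewrite (congr1 (fun F => F (fun j => v (rshift n j))) E).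
congr defset; apply: functional_extensionality => j; by rewrite -Hsb sg.
Qed.

End Glue.


Theorem proposition4p4 (L : language) (kappa : Type) (U : structure L)
  (HU : monster U kappa) (n p : nat)
  (mu : (('I_n -> U) -> Prop) -> R) (nu : (('I_p -> U) -> Prop) -> R)
  (Hmu : keisler (@allM L U) mu) (Hnu : keisler (@allM L U) nu) :
  (forall A : U -> Prop, small kappa A ->
     invariant_over A mu -> geE A mu nu -> invariant_over A nu) /\
  (measure_invariant kappa mu -> geE_some kappa mu nu -> measure_invariant kappa nu).
Proof.
split.
- move=> A HsA Hinv Hge; exact: (part1 Hmu HU HsA Hinv Hge).
- move=> [A [HsA HinvA]] [A' [HsA' [lam [Hk [Hag Hw]]]]].
  have [fN HfN] := proj1 HU.
  have HsB : small kappa (fun x => A x \/ A' x).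
    exact: (card_lt_union _ _ _ _ fN HfN HsA HsA').
  exists (fun x => A x \/ A' x); split => //.
  apply: (part1 Hmu HU HsB).
  + move=> k phi b c Hst; apply: HinvA => l psi a Ha; apply: Hst => i; left; exact: Ha.
  + have [w [wK [w0 [wA [wB wX]]]]] := amalg_inst Hmu Hk Hag.
    exists w; split.
    * split; first exact: (proj1 wK).
      split; first by move=> S _; exact: w0.
      by move=> S T _ _; exact: wA.
    * split.
      -- move=> S HS; apply: wX; apply: (def_weak _ HS) => x _; exact: I.
      -- move=> w2 Hk2 Hag2 Hx2; apply: Hw => //.
         move=> S HS; rewrite Hag2; first exact: wB.
         apply: (def_weak _ HS) => x Hx; by right.
Qed.
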